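(* Let $S$ be a regular semigroup with apartness satisfying assumption (CD$_S$), and let $\kappa$ be a co-congruence on $S$. Then $\kappa$ is idempotent separating if and only if $\tilde{\mathcal H}\subset\kappa$.
   Context: Constructive (intuitionistic) mathematics. A semigroup with apartness is a semigroup with an apartness relation $\#$ (irreflexive, symmetric, cotransitive: $x\#z\Rightarrow(x\#y\vee y\#z)$) such that $xy\#zw\Rightarrow(x\#z\vee y\#w)$. $S$ is regular if every $a\in S$ has some $x$ with $axa=a$. A co-congruence is a relation $\kappa\subset\#$ that is symmetric, cotransitive and co-compatible: $(ax)\kappa(by)\Rightarrow(a\kappa b\vee x\kappa y)$. It is idempotent separating if $e\#f\Rightarrow e\kappa f$ for all idempotents $e,f$. $S^1=S\sqcup\{1\}$, $1$ an identity, $1\#s$ for all $s$. $a\succ_l b\Leftrightarrow\forall_{s\in S^1}(a\#sb)$; $a\succ_r b\Leftrightarrow\forall_{s\in S^1}(a\#bs)$; $\tilde{\mathcal L}=(\succ_l)\cup(\succ_l)^{-1}$, $\tilde{\mathcal R}=(\succ_r)\cup(\succ_r)^{-1}$, $\tilde{\mathcal H}=\tilde{\mathcal L}\cup\tilde{\mathcal R}$. Assumption (CD$_S$): for every predicate $P(x)$ of the form $u(x)\#v$ or $\forall_s(u(s,x)\#v)$ ($u,v$ terms built by multiplication from variables and elements of $S^1$, $x$ not occurring in $v$), and every $Q$ of the form $u\#v$, $\forall_s(u(s)\#v)$ or $\forall_{s,t}(u(s,t)\#v)$ ($x$ not occurring in $u,v$; $s,t$ not in $v$), the implication $\forall_x(P(x)\vee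 Q)\Rightarrow(\forall_xP(x))\vee Q$ holds. *)

(* Defs.v *)
Record ApSemigroup := {
  carrier :> Type;
  mul : carrier -> carrier -> carrier;
  ap : carrier -> carrier -> Prop;
  mulA : forall x y z, mul x (mul y z) = mul (mul x y) z;
  ap_irrefl : forall x, ~ ap x x;
  ap_sym : forall x y, ap x y -> ap y x;
  ap_cotrans : forall x y z, ap x z -> ap x y \/ ap y z;
  mul_strext : forall x y z w, ap (mul x y) (mul z w) -> ap x z \/ ap y w
}.

Arguments mul {a} _ _ : rename.
Arguments ap {a} _ _ : rename.

Section Defs.
Variable S : ApSemigroup.

Definition regular : Prop := forall a : S, exists x : S, mul (mul a x) a = a.

Definition idempotent (e : S) : Prop := mul e e = e.

(** S^1 = S + {1}; [None] is the adjoined identity 1. *)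
Definition S1 := option S.

Definition mul1 (a b : S1) : S1 :=
  match a, b with
  | None, _ => b
  | _, None => a
  | Some x, Some y => Some (mul x y)
  end.

Definition ap1 (a b : S1) : Prop :=
  match a, b with
  | None, None => False
  | None, Some _ => True
  | Some _, None => True
  | Some x, Some y => ap x y
  end.

Definition lmul1 (s : S1) (b : S) : S := match s with None => b | Some x => mul x b end.
Definition rmul1 (b : S) (s : S1) : S := match s with None => b | Some x => mul b x end.

Definition succ_l (a b : S) : Prop := forall s : S1, ap a (lmul1 s b).
Definition succ_r (a b : S) : Prop := forall s : S1, ap a (rmul1 b s).

Definition Ltilde (a b : S) : Prop := succ_l a b \/ succ_l b a.
Definition Rtilde (a b : S) : Prop := succ_r a b \/ succ_r b a.
Definition Htilde (a b : S) : Prop := Ltilde a b \/ Rtilde a b.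

Definition cocongruence (k : S -> S -> Prop) : Prop :=
  (forall a b, k a b -> ap a b) /\
  (forall a b, k a b -> k b a) /\
  (forall x y z, k x z -> k x y \/ k y z) /\
  (forall a b x y, k (mul a x) (mul b y) -> k a b \/ k x y).

Definition idempotent_separating (k : S -> S -> Prop) : Prop :=
  forall e f : S, idempotent e -> idempotent f -> ap e f -> k e f.

Inductive term (V : Type) : Type :=
| TVar (v : V)
| TConst (c : S1)
| TMul (t1 t2 : term V).

Arguments TVar {V} _.
Arguments TConst {V} _.
Arguments TMul {V} _ _.

Fixpoint eval {V : Type} (rho : V -> S1) (t : term V) : S1 :=
  match t with
  | TVar v => rho v
  | TConst c => c
  | TMul t1 t2 => mul1 (eval rho t1) (eval rho t2)
  end.

Inductive V_x := vx.
Inductive V_s := vs.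
Inductive V_sx := vs_sx | vx_sx.
Inductive V_st := vs_st | vt_st.

Definition env0 : Empty_set -> S1 := fun e => match e with end.

(** Predicates P(x): u(x) # v, or forall s, u(s,x) # v (x not in v). *)
Inductive Pform :=
| PAp (u : term V_x) (v : term Empty_set)
| PAll (u : term V_sx) (v : term V_s).

Definition Peval (p : Pform) (x : S) : Prop :=
  match p with
  | PAp u v => ap1 (eval (fun _ => Some x) u) (eval env0 v)
  | PAll u v => forall s : S1,
      ap1 (eval (fun w => match w with vs_sx => s | vx_sx => Some x end) u)
          (eval (fun _ => s) v)
  end.

(** Propositions Q (x does not occur): u # v, forall s, u(s) # v,
    forall s t, u(s,t) # v (s, t not in v). *)
Inductive Qform :=
| QAp (u v : term Empty_set)
| QAll1 (u : term V_s) (v : term Empty_set)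
| QAll2 (u : term V_st) (v : term Empty_set).

Definition Qeval (q : Qform) : Prop :=
  match q with
  | QAp u v => ap1 (eval env0 u) (eval env0 v)
  | QAll1 u v => forall s : S1, ap1 (eval (fun _ => s) u) (eval env0 v)
  | QAll2 u v => forall s t : S1,
      ap1 (eval (fun w => match w with vs_st => s | vt_st => t end) u) (eval env0 v)
  end.

Definition CD_S : Prop :=
  forall (P : Pform) (Q : Qform),
    (forall x : S, Peval P x \/ Qeval Q) -> (forall x : S, Peval P x) \/ Qeval Q.

End Defs.

(* Main.v *)
Require Import Defs.

Section Helpers.
Variable S : ApSemigroup.
Variable k : S -> S -> Prop.
Hypothesis Hk : cocongruence S k.

Lemma k_irr a : k a a -> False.
Proof. destruct Hk as [H1 _]. intro H. exact (ap_irrefl S a (H1 _ _ H)). Qed.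

Lemma k_sym a b : k a b -> k b a.
Proof. destruct Hk as [_ [H _]]. apply H. Qed.

Lemma k_cot a b c : k a c -> k a b \/ k b c.
Proof. destruct Hk as [_ [_ [H _]]]. apply H. Qed.

Lemma kl u a b : k (mul u a) (mul u b) -> k a b.
Proof. destruct Hk as [_ [_ [_ H]]]. intro H0. destruct (H _ _ _ _ H0) as [H1|H1]; auto.
  exfalso; exact (k_irr _ H1). Qed.

Lemma kr u a b : k (mul a u) (mul b u) -> k a b.
Proof. destruct Hk as [_ [_ [_ H]]]. intro H0. destruct (H _ _ _ _ H0) as [H1|H1]; auto.
  exfalso; exact (k_irr _ H1). Qed.

Lemma Kc_cc (e c : S) : mul e e = e -> k c (mul c c) -> k e c.
Proof.
  intros He H. destruct (k_cot _ e _ H) as [H1|H1].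
  - apply k_sym; exact H1.
  - rewrite <- He in H1. destruct Hk as [_ [_ [_ Hc]]].
    destruct (Hc _ _ _ _ H1); assumption.
Qed.

Lemma key (e c z : S) : mul e e = e ->
  mul (mul (mul c c) z) (mul c c) = mul c c ->
  k e (mul (mul c z) c) -> k e c.
Proof.
  intros He Hz H.
  destruct (k_cot _ c _ H) as [H1|H1]; [exact H1|].
  destruct (k_cot _ (mul c c) _ H1) as [H2|H2]; [exact (Kc_cc _ _ He H2)|].
  apply k_sym in H2. rewrite <- Hz in H2.
  destruct (k_cot _ (mul (mul (mul c c) z) c) _ H2) as [H3|H3].
  - replace (mul (mul c z) c) with (mul c (mul z c)) in H3 by (rewrite !mulA; reflexivity).
    replace (mul (mul (mul c c) z) c) with (mul (mul c c) (mul z c)) in H3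
      by (rewrite !mulA; reflexivity).
    destruct Hk as [_ [_ [_ Hc]]].
    destruct (Hc _ _ _ _ H3) as [H4|H4].
    + exact (Kc_cc _ _ He H4).
    + exfalso; exact (k_irr _ H4).
  - 
    destruct Hk as [_ [_ [_ Hc]]].
    destruct (Hc _ _ _ _ H3) as [H4|H4].
    + exfalso; exact (k_irr _ H4).
    + exact (Kc_cc _ _ He H4).
Qed.
End Helpers.

Section Main.
Variable S : ApSemigroup.

Lemma idem_H (e f : S) : mul e e = e -> mul f f = f -> ap e f -> Htilde S e f.
Proof.
  intros He Hf H.
  destruct (ap_cotrans S e (mul e f) f H) as [H1|H1].
  - left; left. intros [s|]; simpl; [|exact H].
    destruct (ap_cotrans S e (mul s f) _ H1) as [H2|H2]; [exact H2|].
    replace (mul s f) with (mul (mul s f) f) in H2 by (rewrite <- mulA, Hf; reflexivity).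
    destruct (mul_strext S _ _ _ _ H2) as [H3|H3].
    + apply ap_sym; exact H3.
    + exfalso; exact (ap_irrefl S _ H3).
  - right; right. apply ap_sym in H1. intros [s|]; simpl; [|apply ap_sym; exact H].
    destruct (ap_cotrans S f (mul e s) _ H1) as [H2|H2]; [exact H2|].
    replace (mul e s) with (mul e (mul e s)) in H2 by (rewrite mulA, He; reflexivity).
    destruct (mul_strext S _ _ _ _ H2) as [H3|H3].
    + exfalso; exact (ap_irrefl S _ H3).
    + apply ap_sym; exact H3.
Qed.

Lemma strong_inv (c : S) (Hreg : regular S) : exists z : S,
  mul (mul (mul c c) z) (mul c c) = mul c c /\ mul (mul z (mul c c)) z = z.
Proof.
  destruct (Hreg (mul c c)) as [z0 Hz0].
  remember (mul c c) as C.
  exists (mul (mul z0 C) z0). split.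
  - replace (mul (mul C (mul (mul z0 C) z0)) C) with (mul (mul (mul C z0) C) (mul z0 C))
      by (rewrite !mulA; reflexivity).
    rewrite Hz0, mulA. exact Hz0.
  - replace (mul (mul (mul (mul z0 C) z0) C) (mul (mul z0 C) z0))
      with (mul (mul z0 (mul (mul (mul C z0) C) z0)) (mul C z0))
      by (rewrite !mulA; reflexivity).
    rewrite Hz0.
    replace (mul (mul z0 (mul C z0)) (mul C z0)) with (mul (mul z0 (mul (mul C z0) C)) z0)
      by (rewrite !mulA; reflexivity).
    rewrite Hz0. reflexivity.
Qed.

Lemma g_idem (c z : S) : mul (mul z (mul c c)) z = z ->
  mul (mul (mul c z) c) (mul (mul c z) c) = mul (mul c z) c.
Proof.
  intro Hz.
  replace (mul (mul (mul c z) c) (mul (mul c z) c)) with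
    (mul (mul c (mul (mul z (mul c c)) z)) c) by (rewrite !mulA; reflexivity).
  rewrite Hz. reflexivity.
Qed.
End Main.

Theorem mainTheorem19 (S : ApSemigroup) (Hreg : regular S) (Hcd : CD_S S)
  (k : S -> S -> Prop) (Hk : cocongruence S k) :
  idempotent_separating S k <-> (forall a b : S, Htilde S a b -> k a b).
Proof.
  split.
  - intros Hsep.
    assert (HL : forall a b : S, succ_l S a b -> k a b).
    { intros a b Hab. destruct (Hreg a) as [x Hx].
      destruct (strong_inv S (mul x b) Hreg) as [z [Hz1 Hz2]].
      set (c := mul x b) in *.
      set (e := mul x a).
      assert (He : mul e e = e).
      { unfold e. replace (mul (mul x a) (mul x a)) with (mul x (mul (mul a x) a))
          by (rewrite !mulA; reflexivity). rewrite Hx. reflexivity. }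
      assert (Hg := g_idem S c z Hz2).
      assert (Heg : ap e (mul (mul c z) c)).
      { specialize (Hab (Some (mul (mul (mul (mul a x) b) z) x))). simpl in Hab.
        assert (Ha : mul a e = a) by (unfold e; rewrite mulA; exact Hx).
        replace (mul (mul (mul (mul (mul a x) b) z) x) b) with (mul a (mul (mul c z) c)) in Hab
          by (unfold c; rewrite !mulA; reflexivity).
        assert (Hab2 : ap (mul a e) (mul a (mul (mul c z) c))) by (rewrite Ha; exact Hab).
        clear Hab; rename Hab2 into Hab.
        destruct (mul_strext S _ _ _ _ Hab) as [H|H]; [exfalso; exact (ap_irrefl S _ H)|exact H]. }
      assert (Hk1 := Hsep _ _ He Hg Heg).
      assert (Hk2 := key S k Hk e c z He Hz1 Hk1).
      exact (kl S k Hk _ _ _ Hk2). }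
    assert (HR : forall a b : S, succ_r S a b -> k a b).
    { intros a b Hab. destruct (Hreg a) as [x Hx].
      destruct (strong_inv S (mul b x) Hreg) as [z [Hz1 Hz2]].
      set (c := mul b x) in *.
      set (e := mul a x).
      assert (He : mul e e = e).
      { unfold e. rewrite mulA, Hx. reflexivity. }
      assert (Hg := g_idem S c z Hz2).
      assert (Heg : ap e (mul (mul c z) c)).
      { specialize (Hab (Some (mul (mul (mul (mul x z) b) x) a))). simpl in Hab.
        assert (Ha : mul e a = a) by (unfold e; exact Hx).
        replace (mul b (mul (mul (mul (mul x z) b) x) a)) with (mul (mul (mul c z) c) a) in Hab
          by (unfold c; rewrite !mulA; reflexivity).
        assert (Hab2 : ap (mul e a) (mul (mul (mul c z) c) a)) by (rewrite Ha; exact Hab).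
        clear Hab; rename Hab2 into Hab.
        destruct (mul_strext S _ _ _ _ Hab) as [H|H]; [exact H|exfalso; exact (ap_irrefl S _ H)]. }
      assert (Hk1 := Hsep _ _ He Hg Heg).
      assert (Hk2 := key S k Hk e c z He Hz1 Hk1).
      exact (kr S k Hk _ _ _ Hk2). }
    intros a b [[H|H]|[H|H]].
    + exact (HL _ _ H).
    + exact (k_sym S k Hk _ _ (HL _ _ H)).
    + exact (HR _ _ H).
    + exact (k_sym S k Hk _ _ (HR _ _ H)).
  - intros H e f He Hf Hef. apply H. exact (idem_H S e f He Hf Hef).
Qed.
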